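(* For every integer $r\ge 7$, ${\rm dim}_s(P_5\diamond P_r)={\rm dim}_s(P_5\diamond C_r)=3r-2$.
   Context: The modular product $G\diamond H$ has vertex set $V(G)\times V(H)$; distinct vertices $(g,h)$ and $(g',h')$ are adjacent iff ($g=g'$ and $hh'\in E(H)$), or ($gg'\in E(G)$ and $h=h'$), or ($gg'\in E(G)$ and $hh'\in E(H)$), or ($g\neq g'$, $h\neq h'$, $gg'\notin E(G)$ and $hh'\notin E(H)$). $P_n$ and $C_n$ are the path and cycle on $n$ vertices. ${\rm dim}_s(X)$ is the strong metric dimension: the minimum size of $S\subseteq V(X)$ such that for all distinct $x,y$ some $z\in S$ has $d_X(y,z)=d_X(y,x)+d_X(x,z)$ or $d_X(x,z)=d_X(x,y)+d_X(y,z)$. *)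

(* Defs.v *)
(* Simple graphs = relations on a finType (assumed symmetric, irreflexive). *)
From mathcomp Require Import all_boot.
Local Open Scope nat_scope.
Set Implicit Arguments. Unset Strict Implicit. Unset Printing Implicit Defensive.

Definition pathg (n : nat) : rel 'I_n := fun i j => (i.+1 == j :> nat) || (j.+1 == i :> nat).

Definition cycleg (n : nat) : rel 'I_n :=
  fun i j => (i != j) && (((i.+1 %% n) == j :> nat) || ((j.+1 %% n) == i :> nat)).

Definition modprod (T U : finType) (eG : rel T) (eH : rel U) : rel (T * U) :=
  fun x y =>
    let: (g, h) := x in let: (g', h') := y in
    (x != y) &&
    [|| (g == g') && eH h h',
        eG g g' && (h == h'),
        eG g g' && eH h h'
      | [&& g != g', h != h', ~~ eG g g' & ~~ eH h h']].

Definition reach (T : finType) (e : rel T) (k : nat) (x : T) : {set T} :=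
  iter k (fun A => A :|: [set y | [exists z in A, e z y]]) [set x].

(* graph distance: least k with y reachable within k steps
   (equals #|T| if y is unreachable from x; irrelevant for connected graphs) *)
Definition dist (T : finType) (e : rel T) (x y : T) : nat :=
  find (fun k => y \in reach e k x) (iota 0 #|T|).

Definition strong_resolving (T : finType) (e : rel T) (S : {set T}) : bool :=
  [forall x : T, forall y : T, (x != y) ==>
    [exists z in S,
      (dist e y z == dist e y x + dist e x z) || (dist e x z == dist e x y + dist e y z)]].

(* strong metric dimension: minimum size of a strong resolving set
   (setT is always strongly resolving, so the minimum is attained) *)
Definition sdim (T : finType) (e : rel T) : nat :=
  \big[minn/#|T|]_(S : {set T} | strong_resolving e S) #|S|.

Arguments pathg n : clear implicits.
Arguments cycleg n : clear implicits.

(* Main.v *)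
Require Import Defs.
From mathcomp Require Import all_boot zify.
Set Implicit Arguments. Unset Strict Implicit. Unset Printing Implicit Defensive.

Definition p5 (g g' : nat) : bool := (g.+1 == g') || (g'.+1 == g).

Definition D (g g' : nat) (t : nat) : nat :=
  if g == g' then t
  else if p5 g g' then (if t == 2 then 2 else 1)
  else if t == 2 then 1 else if t == 1 then 2
  else if (g + 3 == g') || (g' + 3 == g) then 3 else 2.

Definition adjT (g g' : nat) (t : nat) : bool :=
  ~~ ((g == g') && (t == 0)) &&
  [|| (g == g') && (t == 1), p5 g g' && (t == 0), p5 g g' && (t == 1)
    | [&& g != g', t == 2 & ~~ p5 g g']].

Definition consb (t1 t2 t3 : nat) : bool :=
  [&& (t2 == 0) ==> (t1 == t3), (t3 == 0) ==> (t1 == t2) & (t1 == 0) ==> (t2 == t3)].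

Notation A5 := (fun P => all P (iota 0 5)).
Notation A3 := (fun P => all P (iota 0 3)).

Lemma P2fin : A5 (fun gx => A5 (fun gy => A5 (fun gz => A3 (fun t1 => A3 (fun t2 => A3 (fun t3 =>
  consb t1 t2 t3 ==> adjT gz gy t3 ==> (D gx gy t1 <= (D gx gz t2).+1))))))).
Proof. by vm_compute. Qed.


Lemma allI (n : nat) (P : pred nat) : all P (iota 0 n) -> forall x, x < n -> P x.
Proof. by move=> /allP H x Hx; apply: H; rewrite mem_iota. Qed.

Definition tau (U : finType) (eH : rel U) (h h' : U) : nat :=
  if h == h' then 0 else if eH h h' then 1 else 2.
Definition F (U : finType) (eH : rel U) (x y : 'I_5 * U) : nat :=
  D x.1 y.1 (tau eH x.2 y.2).

Lemma tau_lt3 (U : finType) (eH : rel U) h h' : tau eH h h' < 3.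
Proof. by rewrite /tau; case: ifP => //; case: ifP. Qed.
Lemma tau_refl (U : finType) (eH : rel U) h : tau eH h h = 0.
Proof. by rewrite /tau eqxx. Qed.
Lemma tau0 (U : finType) (eH : rel U) h h' : (tau eH h h' == 0) = (h == h').
Proof. by rewrite /tau; case: ifP => //; case: ifP. Qed.
Lemma tau_sym (U : finType) (eH : rel U) : symmetric eH -> forall h h', tau eH h h' = tau eH h' h.
Proof. by move=> sym h h'; rewrite /tau eq_sym sym. Qed.

Lemma modprodE (U : finType) (eH : rel U) : irreflexive eH -> forall x y : 'I_5 * U,
  modprod (pathg 5) eH x y = adjT x.1 y.1 (tau eH x.2 y.2).
Proof.
move=> irr [g h] [g' h']; rewrite /modprod /adjT /tau /= xpair_eqE.
rewrite -[g == g']/(nat_of_ord g == nat_of_ord g') /p5 /pathg.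
case: (h =P h') => [<-|neh]; first rewrite irr.
  by case: (nat_of_ord g == nat_of_ord g'); case: (_ || _).
by case: (eH h h'); case: (nat_of_ord g == _); case: (g.+1 == g'); case: (g'.+1 == g).
Qed.

Lemma reach_char (T : finType) (e : rel T) (x : T) (g : T -> nat) :
  g x = 0 -> (forall y, g y = 0 -> y = x) ->
  (forall z y, e z y -> g y <= (g z).+1) ->
  (forall y, y != x -> exists2 z, e z y & (g z).+1 = g y) ->
  forall k y, (y \in reach e k x) = (g y <= k).
Proof.
move=> gx0 g0 lip desc; elim=> [|k IH] y.
  rewrite /reach /= in_set1 leqn0; apply/eqP/eqP => [->//|]; exact: g0.
rewrite /reach iterS -/(reach e k x) in_setU in_set IH.
apply/idP/idP.
  case/orP => [H|]; first exact: leqW.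
  case/exists_inP => z; rewrite IH => Hz ezy.
  exact: leq_trans (lip _ _ ezy) _.
move=> H; case: (leqP (g y) k) => [//|Hk] /=.
have gy : g y = k.+1 by apply/eqP; rewrite eqn_leq H Hk.
have yx : y != x by apply/eqP => yx; move: gy; rewrite yx gx0.
case: (desc y yx) => z ezy gz.
by apply/exists_inP; exists z => //; rewrite IH; move: gz; rewrite gy => -[->].
Qed.

Lemma find_geq (m a n : nat) : a <= m < a + n ->
  find (fun k => m <= k) (iota a n) = m - a.
Proof.
elim: n a => [|n IH] a; first by move/andP; lia.
case/andP=> H1 H2 /=; case: (leqP m a) => Hm.
  lia.
rewrite IH; [lia|]; apply/andP; lia.
Qed.

Lemma dist_char (T : finType) (e : rel T) (x : T) (g : T -> nat) :
  g x = 0 -> (forall y, g y = 0 -> y = x) ->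
  (forall z y, e z y -> g y <= (g z).+1) ->
  (forall y, y != x -> exists2 z, e z y & (g z).+1 = g y) ->
  forall y, g y < #|T| -> dist e x y = g y.
Proof.
move=> H1 H2 H3 H4 y Hy; rewrite /dist.
rewrite (eq_find (a2 := fun k => g y <= k)); last by move=> k; rewrite (reach_char H1 H2 H3 H4).
by rewrite find_geq ?subn0.
Qed.

Definition E2P (U : finType) (eH : rel U) :=
  forall h h', exists h'', [&& h'' != h, h'' != h', ~~ eH h h'' & ~~ eH h'' h'].
Definition E1P (U : finType) (eH : rel U) :=
  forall h h', eH h h' -> exists h'',
    (eH h h'' && (h'' != h') && ~~ eH h'' h') || (eH h'' h' && (h'' != h) && ~~ eH h h'').

Definition hasD (gx gy t t2 t3 : nat) :=
  has (fun gz => adjT gz gy t3 && ((D gx gz t2).+1 == D gx gy t)) (iota 0 5).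

Lemma P3fin : A5 (fun gx => A5 (fun gy => A3 (fun t =>
  ~~ ((gx == gy) && (t == 0)) ==>
  [|| hasD gx gy t 0 t, hasD gx gy t t 0, (t != 1) && hasD gx gy t 2 2
    | [&& t == 1, hasD gx gy t 1 2 & hasD gx gy t 2 1]]))).
Proof. by vm_compute. Qed.

Lemma D0fin : A5 (fun gx => A5 (fun gy => A3 (fun t =>
  (D gx gy t == 0) ==> (gx == gy) && (t == 0)))).
Proof. by vm_compute. Qed.

Lemma D3fin : A5 (fun gx => A5 (fun gy => A3 (fun t => D gx gy t <= 3))).
Proof. by vm_compute. Qed.

Lemma tau2 (U : finType) (eH : rel U) h h' : h != h' -> ~~ eH h h' -> tau eH h h' = 2.
Proof. by rewrite /tau => /negbTE -> /negbTE ->. Qed.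
Lemma tau1 (U : finType) (eH : rel U) h h' : irreflexive eH -> eH h h' -> tau eH h h' = 1.
Proof.
rewrite /tau => irr E; case: (h =P h') => [e|_]; last by rewrite E.
by move: E; rewrite e irr.
Qed.

Lemma hasDP (U : finType) (eH : rel U) (irr : irreflexive eH) (gx gy : 'I_5) hx hy h'' t2 t3 :
  hasD gx gy (tau eH hx hy) t2 t3 -> tau eH hx h'' = t2 -> tau eH h'' hy = t3 ->
  exists2 z : 'I_5 * U, modprod (pathg 5) eH z (gy, hy) &
     (F eH (gx, hx) z).+1 = F eH (gx, hx) (gy, hy).
Proof.
move=> /hasP [gz]; rewrite mem_iota /= => Hgz /andP [A B] E2 E3.
exists (Ordinal Hgz, h''); first by rewrite modprodE //= E3.
by rewrite /F /= E2; apply/eqP.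
Qed.

Lemma distF (U : finType) (eH : rel U) : irreflexive eH -> symmetric eH ->
  E1P eH -> E2P eH -> forall x y : 'I_5 * U,
  dist (modprod (pathg 5) eH) x y = F eH x y.
Proof.
move=> irr sym E1 E2 [gx hx] y.
apply: dist_char.
- by rewrite /F /= tau_refl /D eqxx.
- move=> [gy hy]; rewrite /F /= => /eqP H.
  have := allI (allI (allI D0fin (ltn_ord gx)) (ltn_ord gy)) (tau_lt3 eH hx hy).
  rewrite H => /andP [/eqP g1 /eqP t1]; move: t1 => /eqP; rewrite tau0 => /eqP <-.
  by congr pair; apply: val_inj.
- move=> [gz hz] [gy hy]; rewrite modprodE //= /F /= => A.
  have := allI (allI (allI (allI (allI (allI P2fin (ltn_ord gx)) (ltn_ord gy)) (ltn_ord gz)) (tau_lt3 eH hx hy))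
     (tau_lt3 eH hx hz)) (tau_lt3 eH hz hy).
  move=> H; apply: (implyP (implyP H _) A).
  rewrite /consb !tau0; apply/and3P; split; apply/implyP => /eqP e.
  + by rewrite e.
  + by rewrite e.
  + by rewrite e tau_sym.
- move=> [gy hy] ne.
  have := allI (allI (allI P3fin (ltn_ord gx)) (ltn_ord gy)) (tau_lt3 eH hx hy).
  have -> : ~~ ((nat_of_ord gx == gy) && (tau eH hx hy == 0)).
    apply: contra ne => /andP [/eqP g1]; rewrite tau0 => /eqP <-.
    by apply/eqP; congr pair; apply: val_inj.
  rewrite implyTb => /or4P [H|H|/andP [t1 H]|/and3P [t1 H1 H2]].
  + by apply: (@hasDP _ _ irr gx gy hx hy hx _ _ H); rewrite /tau ?eqxx.
  + by apply: (@hasDP _ _ irr gx gy hx hy hy _ _ H); rewrite /tau ?eqxx.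
  + have [h'' /and4P [n1 n2 n3 n4]] := E2 hx hy.
    by apply: (@hasDP _ _ irr gx gy hx hy h'' _ _ H); apply: tau2; rewrite // eq_sym.
  + have E : eH hx hy.
      move: t1; rewrite /tau; case: ifP => //; case: ifP => //.
    have [h'' /orP [/andP [/andP [a b] c] | /andP [/andP [a b] c]]] := E1 _ _ E.
    * by apply: (@hasDP _ _ irr gx gy hx hy h'' _ _ H1); [apply: tau1|apply: tau2].
    * by apply: (@hasDP _ _ irr gx gy hx hy h'' _ _ H2); [apply: tau2; rewrite // eq_sym|apply: tau1].
- case: y => gy hy; rewrite /F /=.
  have := allI (allI (allI D3fin (ltn_ord gx)) (ltn_ord gy)) (tau_lt3 eH hx hy).
  have : 0 < #|U| by apply/card_gt0P; exists hy.
  rewrite card_prod card_ord; lia.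
Qed.

Definition row (U : finType) (S : {set 'I_5 * U}) (k : nat) : {set U} :=
  [set h | (@inord 4 k, h) \in S].

Lemma cardS_rows (U : finType) (S : {set 'I_5 * U}) :
  #|S| = #|row S 0| + #|row S 1| + #|row S 2| + #|row S 3| + #|row S 4|.
Proof.
rewrite -sum1_card big_mkcond /=.
transitivity (\sum_(p : 'I_5 * U) (fun (g : 'I_5) (h : U) => if (g, h) \in S then 1 else 0) p.1 p.2).
  by apply: eq_bigr => -[g h].
rewrite -(pair_bigA _ (fun (g : 'I_5) (h : U) => if (g, h) \in S then 1 else 0)) /=.
rewrite (eq_bigr (fun g : 'I_5 => #|row S (val g)|)); last first.
  move=> g _; rewrite -sum1_card [RHS]big_mkcond /=; apply: eq_bigr => h _.
  by rewrite /row inE inord_val.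
rewrite -(big_mkord xpredT (fun k => #|row S k|)).
by rewrite /index_iota /= !big_cons big_nil addn0 !addnA.
Qed.

Lemma lowpair (U : finType) (eH : rel U) (irr : irreflexive eH) (sym : symmetric eH)
  (E1 : E1P eH) (E2 : E2P eH) (S : {set 'I_5 * U}) (a b : nat) :
  strong_resolving (modprod (pathg 5) eH) S -> a < 5 -> b < 5 -> a != b ->
  A5 (fun gz => A3 (fun t =>
    (D b gz t == D b a 0 + D a gz t) || (D a gz t == D a b 0 + D b gz t) ==>
    (t == 0) && ((gz == a) || (gz == b)))) ->
  forall h, ((@inord 4 a, h) \in S) || ((@inord 4 b, h) \in S).
Proof.
move=> srS a5 b5 ab chk h.
have nxy : (@inord 4 a, h) != (@inord 4 b, h).
  rewrite xpair_eqE eqxx andbT; apply: contra ab => /eqP/(congr1 (@nat_of_ord 5)).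
  by rewrite !inordK // => ->.
move/forallP/(_ (inord a, h))/forallP/(_ (inord b, h)): srS.
rewrite nxy /= => /exists_inP [[gz hz] zS].
rewrite !distF // /F /= !inordK // tau_refl => C.
have := allI (allI chk (ltn_ord gz)) (tau_lt3 eH h hz).
rewrite C /= tau0 => /andP [/eqP e /orP [] /eqP g]; subst hz.
- by rewrite (_ : inord a = gz) ?zS //; apply: val_inj; rewrite /= inordK.
- by rewrite (_ : inord b = gz) ?zS ?orbT //; apply: val_inj; rewrite /= inordK.
Qed.

Lemma L22fin : A5 (fun gz => A3 (fun t2 => A3 (fun t3 =>
  (D 2 gz t3 == D 2 2 2 + D 2 gz t2) || (D 2 gz t2 == D 2 2 2 + D 2 gz t3) ==>
  (gz == 2) && ((t2 == 0) || (t3 == 0))))).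
Proof. by vm_compute. Qed.

Lemma low22 (U : finType) (eH : rel U) (irr : irreflexive eH) (sym : symmetric eH)
  (E1 : E1P eH) (E2 : E2P eH) (S : {set 'I_5 * U}) :
  strong_resolving (modprod (pathg 5) eH) S ->
  forall h h', h != h' -> ~~ eH h h' ->
  ((@inord 4 2, h) \in S) || ((@inord 4 2, h') \in S).
Proof.
move=> srS h h' nh ne.
have nxy : (@inord 4 2, h) != (@inord 4 2, h') by rewrite xpair_eqE eqxx.
move/forallP/(_ (inord 2, h))/forallP/(_ (inord 2, h')): srS.
rewrite nxy /= => /exists_inP [[gz hz] zS].
rewrite !distF // /F /= !inordK // (tau2 nh ne) (tau_sym sym h' h) (tau2 nh ne) => C.
have := allI (allI (allI L22fin (ltn_ord gz)) (tau_lt3 eH h hz)) (tau_lt3 eH h' hz).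
rewrite C /= !tau0 => /andP [/eqP g /orP [] /eqP e]; subst hz.
- by rewrite (_ : inord 2 = gz) ?zS //; apply: val_inj; rewrite /= inordK.
- by rewrite (_ : inord 2 = gz) ?zS ?orbT //; apply: val_inj; rewrite /= inordK.
Qed.

Lemma lower (U : finType) (eH : rel U) (irr : irreflexive eH) (sym : symmetric eH)
  (E1 : E1P eH) (E2 : E2P eH)
  (tri : forall a b c, eH a b -> eH b c -> eH a c -> False) (S : {set 'I_5 * U}) :
  strong_resolving (modprod (pathg 5) eH) S -> 3 * #|U| - 2 <= #|S|.
Proof.
move=> srS; rewrite cardS_rows.
have c03 : #|U| <= #|row S 0| + #|row S 3|.
  rewrite -cardsT; apply: leq_trans (leq_card_setU _ _); apply: subset_leq_card.
  apply/subsetP => h _; rewrite !inE.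
  exact: (lowpair irr sym E1 E2 (a := 0) (b := 3) srS).
have c14 : #|U| <= #|row S 1| + #|row S 4|.
  rewrite -cardsT; apply: leq_trans (leq_card_setU _ _); apply: subset_leq_card.
  apply/subsetP => h _; rewrite !inE.
  exact: (lowpair irr sym E1 E2 (a := 1) (b := 4) srS).
have c2 : #|~: row S 2| <= 2.
  rewrite leqNgt; apply/negP => /card_gt2P [x [y [z [[hx hy hz] [nxy nyz nzx]]]]].
  move: hx hy hz; rewrite !inE => hx hy hz.
  have adj : forall a b, a != b -> (@inord 4 2, a) \notin S -> (@inord 4 2, b) \notin S -> eH a b.
    move=> a b nab na nb; apply/negPn/negP => nE.
    by move: (low22 irr sym E1 E2 srS nab nE); rewrite (negbTE na) (negbTE nb).
  apply: (tri x y z); apply: adj => //; first by rewrite eq_sym.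
have e := cardsC (row S 2).
lia.
Qed.

Definition condX (gx gy t g : nat) :=
  (D gy g t == D gy gx t + D gx g 0) || (D gx g 0 == D gx gy t + D gy g t).
Definition condY (gx gy t g : nat) :=
  (D gy g 0 == D gy gx t + D gx g t) || (D gx g t == D gx gy t + D gy g 0).

Lemma UBfin : A5 (fun gx => A5 (fun gy => A3 (fun t =>
  [&& 2 <= gx, 2 <= gy, ~~ ((gx == gy) && (t == 0)) & ~~ ((gx == 2) && (gy == 2))] ==>
  has (fun g => condX gx gy t g || condY gx gy t g) (iota 0 2)))).
Proof. by vm_compute. Qed.

Definition S0 (U : finType) (c0 c1 : U) : {set 'I_5 * U} :=
  [set x : 'I_5 * U | (nat_of_ord x.1 <= 1) || [&& nat_of_ord x.1 == 2, x.2 != c0 & x.2 != c1]].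

Lemma S0_card (U : finType) (c0 c1 : U) : c0 != c1 -> #|S0 c0 c1| = 3 * #|U| - 2.
Proof.
move=> nc; rewrite cardS_rows.
have r0 : #|row (S0 c0 c1) 0| = #|U|.
  by rewrite -cardsT; apply: eq_card => h; rewrite !inE inordK.
have r1 : #|row (S0 c0 c1) 1| = #|U|.
  by rewrite -cardsT; apply: eq_card => h; rewrite !inE inordK.
have r3 : #|row (S0 c0 c1) 3| = 0.
  by apply/eqP; rewrite cards_eq0; apply/eqP/setP => h; rewrite !inE inordK.
have r4 : #|row (S0 c0 c1) 4| = 0.
  by apply/eqP; rewrite cards_eq0; apply/eqP/setP => h; rewrite !inE inordK.
have r2 : #|row (S0 c0 c1) 2| + 2 = #|U|.
  rewrite -(cardsC [set c0; c1]) cards2 nc addnC; congr (_ + _).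
  by apply: eq_card => h; rewrite !inE inordK // negb_or.
lia.
Qed.

Lemma upper_sr (U : finType) (eH : rel U) (irr : irreflexive eH) (sym : symmetric eH)
  (E1 : E1P eH) (E2 : E2P eH) (c0 c1 : U) : eH c0 c1 ->
  strong_resolving (modprod (pathg 5) eH) (S0 c0 c1).
Proof.
move=> ec; apply/forallP => x; apply/forallP => y; apply/implyP => nxy.
suff [z zS Hz] : exists2 z, z \in S0 c0 c1 &
    (F eH y z == F eH y x + F eH x z) || (F eH x z == F eH x y + F eH y z).
  by apply/exists_inP; exists z; rewrite // !distF.
have Fxx : forall w, F eH w w = 0 by move=> [g h]; rewrite /F tau_refl /D eqxx.
case xS : (x \in S0 c0 c1); first by exists x; rewrite // Fxx addn0 eqxx.
case yS : (y \in S0 c0 c1); first by exists y; rewrite // Fxx addn0 eqxx orbT.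
move: x y nxy xS yS => [gx hx] [gy hy] nxy; rewrite !inE /= => /norP [xa xb] /norP [ya yb].
have ts := tau_sym sym.
case: (boolP ((nat_of_ord gx == 2) && (nat_of_ord gy == 2))) => [/andP [/eqP g2 /eqP g2'] | n22].
  have hx01 : (hx == c0) || (hx == c1) by move: xb; rewrite g2 /=; case: (hx == c0); case: (hx == c1).
  have hy01 : (hy == c0) || (hy == c1) by move: yb; rewrite g2' /=; case: (hy == c0); case: (hy == c1).
  have nh : hx != hy.
    apply: contra nxy => /eqP e; subst hy; rewrite xpair_eqE eqxx andbT.
    by rewrite -[gx == gy]/(nat_of_ord gx == nat_of_ord gy) g2 g2'.
  have E : eH hx hy.
    move: hx01 hy01 nh => /orP [] /eqP -> /orP [] /eqP ->; rewrite ?eqxx // => _.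
    by rewrite sym.
  have t1 := tau1 irr E.
  have [h'' /orP [/andP [/andP [a b] c] | /andP [/andP [a b] c]]] := E1 _ _ E.
  - exists (@inord 4 0, h''); first by rewrite !inE inordK.
    rewrite /F /= g2 g2' inordK // (ts hy hx) t1 (tau1 irr a) (ts hy h'') (tau2 _ _) //.
  - exists (@inord 4 0, h''); first by rewrite !inE inordK.
    by rewrite /F /= g2 g2' inordK // (ts hy hx) t1 (ts hy h'') (tau1 irr a) (@tau2 _ _ hx h'') // eq_sym.
have := allI (allI (allI UBfin (ltn_ord gx)) (ltn_ord gy)) (tau_lt3 eH hx hy).
have -> : [&& 2 <= gx, 2 <= gy, ~~ ((nat_of_ord gx == gy) && (tau eH hx hy == 0))
   & ~~ ((nat_of_ord gx == 2) && (nat_of_ord gy == 2))].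
  move: xa ya; rewrite -!ltnNge => xa ya; rewrite n22 xa ya andbT /= tau0.
  apply: contra nxy => /andP [/eqP g /eqP e]; subst hy; rewrite xpair_eqE eqxx andbT.
  by apply/eqP; apply: val_inj.
rewrite implyTb => /hasP [g]; rewrite mem_iota /= => g2.
have g5 : g < 5 by apply: leq_trans g2 _.
move/orP => [C|C].
- exists (@inord 4 g, hx); first by rewrite !inE inordK // -ltnS g2.
  by rewrite /F /= inordK // tau_refl (ts hy hx).
- exists (@inord 4 g, hy); first by rewrite !inE inordK // -ltnS g2.
  by rewrite /F /= inordK // tau_refl (ts hy hx).
Qed.

Lemma bigmin_le (I : eqType) (s : seq I) (P : pred I) (Fn : I -> nat) d j :
  j \in s -> P j -> \big[minn/d]_(i <- s | P i) Fn i <= Fn j.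
Proof.
elim: s => [//|a s IH]; rewrite inE big_cons => /orP [/eqP <-|js] Pj.
  by rewrite Pj geq_minl.
case: (P a); last exact: IH.
by apply: leq_trans (geq_minr _ _) (IH js Pj).
Qed.

Lemma sdim_gen (U : finType) (eH : rel U) (irr : irreflexive eH) (sym : symmetric eH)
  (E1 : E1P eH) (E2 : E2P eH)
  (tri : forall a b c, eH a b -> eH b c -> eH a c -> False) (c0 c1 : U) :
  eH c0 c1 -> sdim (modprod (pathg 5) eH) = 3 * #|U| - 2.
Proof.
move=> ec; have nc : c0 != c1 by apply: contraTneq ec => ->; rewrite irr.
apply/eqP; rewrite eqn_leq; apply/andP; split.
  rewrite /sdim -(S0_card nc); apply: bigmin_le; last exact: upper_sr.
  by rewrite mem_index_enum.
rewrite /sdim; apply: (big_ind (fun m => 3 * #|U| - 2 <= m)).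
- rewrite card_prod card_ord; lia.
- by move=> a b Ha Hb; rewrite leq_min Ha Hb.
- by move=> S srS; apply: lower.
Qed.

Lemma ordE (n : nat) (x y : 'I_n) : (x == y) = (nat_of_ord x == nat_of_ord y).
Proof. by []. Qed.

Lemma avoid (r : nat) (s : seq nat) (P : pred 'I_r) :
  size s < r -> (forall x, P x -> nat_of_ord x \in s) -> exists x, ~~ P x.
Proof.
move=> Hs HP; case: (pickP [pred x | ~~ P x]) => [x Hx|H]; first by exists x.
have Un : uniq (map (@nat_of_ord r) (enum 'I_r)).
  by rewrite map_inj_uniq ?enum_uniq //; exact: val_inj.
have sub : {subset map (@nat_of_ord r) (enum 'I_r) <= s}.
  by move=> n /mapP [x _ ->]; apply: HP; move: (H x) => /= /negbFE.
have := uniq_leq_size Un sub; rewrite size_map size_enum_ord => Hr.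
by move: Hs; rewrite ltnNge Hr.
Qed.

Lemma path_irr r : irreflexive (pathg r).
Proof. move=> i; rewrite /pathg; apply/negbTE; lia. Qed.
Lemma path_sym r : symmetric (pathg r).
Proof. by move=> i j; rewrite /pathg orbC. Qed.
Lemma path_tri r (a b c : 'I_r) : pathg r a b -> pathg r b c -> pathg r a c -> False.
Proof. rewrite /pathg; lia. Qed.
Lemma path_E2 r : 7 <= r -> E2P (pathg r).
Proof.
move=> r7 h h'.
pose s := [:: h.-1; nat_of_ord h; h.+1; h'.-1; nat_of_ord h'; h'.+1].
pose P := [pred x : 'I_r | [|| x == h, x == h', pathg r h x | pathg r x h']].
have Hs : size s < r by rewrite /=; lia.
have HP : forall x, P x -> nat_of_ord x \in s.
  move=> x /=; rewrite !ordE /pathg !inE; lia.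
have [x Hx] := avoid Hs HP.
by exists x; move: Hx; rewrite /= !negb_or => /and4P [-> -> -> ->].
Qed.
Lemma path_E1 r : 7 <= r -> E1P (pathg r).
Proof.
move=> r7 h h' E; have := ltn_ord h; have := ltn_ord h'; move: E; rewrite /pathg => E l1 l2.
case: (ltnP (maxn h h').+1 r) => Hr.
  exists (Ordinal Hr); rewrite !ordE /=; lia.
have Hk : (minn h h').-1 < r by lia.
exists (Ordinal Hk); rewrite !ordE /=; lia.
Qed.

Lemma succ_modE (r a b : nat) : a < r -> b < r ->
  (a.+1 %% r == b) = (a.+1 == b) || ((a.+1 == r) && (b == 0)).
Proof.
move=> ar br; case: (ltngtP a.+1 r) => H.
- rewrite modn_small //; lia.
- lia.
- rewrite H modnn; lia.
Qed.

Lemma cycE (r : nat) (i j : 'I_r) : cycleg r i j =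
  (nat_of_ord i != j) && [|| i.+1 == j, (i.+1 == r) && (j == 0 :> nat),
                            j.+1 == i | (j.+1 == r) && (i == 0 :> nat)].
Proof.
rewrite /cycleg !succ_modE ?ltn_ord // ordE; congr (_ && _).
by rewrite !orbA.
Qed.

Lemma cyc_irr r : irreflexive (cycleg r).
Proof. by move=> i; rewrite /cycleg eqxx. Qed.
Lemma cyc_sym r : symmetric (cycleg r).
Proof. by move=> i j; rewrite /cycleg eq_sym orbC. Qed.
Lemma cyc_tri r (a b c : 'I_r) : 7 <= r -> cycleg r a b -> cycleg r b c -> cycleg r a c -> False.
Proof.
have := ltn_ord a; have := ltn_ord b; have := ltn_ord c.
rewrite !cycE; lia.
Qed.
Lemma cyc_E2 r : 7 <= r -> E2P (cycleg r).
Proof.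
move=> r7 h h'.
pose s := [:: nat_of_ord h; (if h.+1 == r then 0 else h.+1); (if h == 0 :> nat then r.-1 else h.-1);
              nat_of_ord h'; (if h'.+1 == r then 0 else h'.+1); (if h' == 0 :> nat then r.-1 else h'.-1)].
pose P := [pred x : 'I_r | [|| x == h, x == h', cycleg r h x | cycleg r x h']].
have Hs : size s < r by rewrite /=; lia.
have HP : forall x, P x -> nat_of_ord x \in s.
  move=> x /=; have := ltn_ord x; have := ltn_ord h; have := ltn_ord h'.
  rewrite !ordE !cycE !inE.
  case: ifP; case: ifP; case: ifP; case: ifP; lia.
have [x Hx] := avoid Hs HP.
by exists x; move: Hx; rewrite /= !negb_or => /and4P [-> -> -> ->].
Qed.
Lemma cyc_E1 r : 7 <= r -> E1P (cycleg r).
Proof.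
move=> r7 h h'; have := ltn_ord h; have := ltn_ord h'; rewrite cycE => l1 l2 E.
pose k := if h'.+1 == r then 0 else h'.+1.
pose k2 := if h.+1 == r then 0 else h.+1.
have Hk : k < r by rewrite /k; case: ifP; lia.
have Hk2 : k2 < r by rewrite /k2; case: ifP; lia.
case/orP: (orbN ((h.+1 == h' :> nat) || ((h.+1 == r) && (h' == 0 :> nat)))) => D.
  exists (Ordinal Hk); rewrite !ordE !cycE /= /k; case: ifP; lia.
exists (Ordinal Hk2); rewrite !ordE !cycE /= /k2; case: ifP; lia.
Qed.

Theorem mainTheorem16 (r : nat) : 7 <= r ->
  sdim (modprod (pathg 5) (pathg r)) = 3 * r - 2 /\
  sdim (modprod (pathg 5) (cycleg r)) = 3 * r - 2.
Proof.
move=> r7; have r0 : 0 < r by lia.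
have r1 : 1 < r by lia.
split.
- rewrite (@sdim_gen _ _ (@path_irr r) (@path_sym r) (path_E1 r7) (path_E2 r7)
     (@path_tri r) (Ordinal r0) (Ordinal r1)) ?card_ord //.
- rewrite (@sdim_gen _ _ (@cyc_irr r) (@cyc_sym r) (cyc_E1 r7) (cyc_E2 r7)
     (fun a b c => @cyc_tri r a b c r7) (Ordinal r0) (Ordinal r1)) ?card_ord //.
  by rewrite cycE /=; lia.
Qed.
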